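(* Let $n\ge1$. Then $$\min_{1\le i\le n} s\big([(10)^i0(10)^{n-i}]_2\big)=F_{2n+1}+F_{2n-1}.$$
   Context: Stern's sequence $(a(n))_{n\ge0}$: $a(0)=0$, $a(1)=1$, $a(2n)=a(n)$, $a(2n+1)=a(n)+a(n+1)$; $s(n)=a(n+1)$. For a binary string $x$, $[x]_2$ is the integer it represents in base 2; $x^i$ denotes $i$-fold concatenation ($x^0$ empty). $F_n$ are the Fibonacci numbers ($F_0=0,F_1=1,F_n=F_{n-1}+F_{n-2}$). *)

(* Defs.v *)
From mathcomp Require Import all_boot.
Set Implicit Arguments. Unset Strict Implicit. Unset Printing Implicit Defensive.

(* Stern's diatomic sequence a(n), computed with fuel (fuel n suffices,
   since the recursive arguments n./2 and n./2 + 1 are < n for n >= 2). *)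
Fixpoint stern_fuel (fuel n : nat) : nat :=
  match fuel with
  | 0 => 0
  | k.+1 =>
      if n <= 1 then n
      else if odd n then stern_fuel k n./2 + stern_fuel k n./2.+1
      else stern_fuel k n./2
  end.

Definition stern (n : nat) : nat := stern_fuel n n.

Definition stern_s (n : nat) : nat := stern n.+1.

(* binary strings: seq bool, most significant bit first; true = 1 *)
Definition bin_val (x : seq bool) : nat := foldl (fun (acc : nat) (b : bool) => acc.*2 + nat_of_bool b) 0 x.

Definition srep (i : nat) (x : seq bool) : seq bool := flatten (nseq i x).

Fixpoint fib (n : nat) : nat :=
  match n with
  | 0 => 0
  | 1 => 1
  | (m.+1 as k).+1 => fib k + fib m
  end.

Definition word (n i : nat) : seq bool :=
  srep i [:: true; false] ++ [:: false] ++ srep (n - i) [:: true; false].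

Example stern_check : map stern (iota 0 10) = [:: 0; 1; 1; 2; 1; 3; 2; 3; 1; 4]. Proof. by []. Qed.
Example word_check : bin_val (word 2 1) = 18. Proof. by []. Qed.
Example fib_check : fib 5 = 5. Proof. by []. Qed.

(* Main.v *)
Require Import Defs.
From mathcomp Require Import all_boot.
From mathcomp Require Import zify.

Lemma stern_fuel_indep f g n : n <= f -> n <= g -> stern_fuel f n = stern_fuel g n.
Proof.
elim: f g n => [|f IH] [|g] n Hf Hg //=.
- by have -> : n = 0 by lia.
- by have -> : n = 0 by lia.
- case: ifP => // Hn.
  have H := odd_double_half n.
  rewrite -muln2 in H.
  case: ifP => Ho; rewrite Ho /= in H.
  + by rewrite (IH g n./2) ?(IH g n./2.+1); lia.
  + by rewrite (IH g n./2); lia.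
Qed.

Lemma stern_fuelS f n : stern_fuel f.+1 n = if n <= 1 then n else if odd n then stern_fuel f n./2 + stern_fuel f n./2.+1 else stern_fuel f n./2.
Proof. by []. Qed.

Lemma stern_rec n : stern n = if n <= 1 then n else if odd n then stern n./2 + stern n./2.+1 else stern n./2.
Proof.
case: n => [|n]; first by [].
rewrite /stern stern_fuelS.
move: (odd_double_half n.+1).
set N := n.+1 => H.
rewrite -muln2 in H.
case: ifP => // Hn.
case Ho: (odd N); rewrite Ho /= in H.
+ by rewrite (@stern_fuel_indep n N./2 N./2) ?(@stern_fuel_indep n N./2.+1 N./2.+1); lia.
+ by rewrite (@stern_fuel_indep n N./2 N./2); lia.
Qed.

Lemma stern_even m : stern m.*2 = stern m.
Proof.
case: m => [|m] //. by rewrite stern_rec odd_double doubleK doubleS.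
Qed.

Lemma stern_odd m : stern m.*2.+1 = stern m + stern m.+1.
Proof.
rewrite stern_rec.
have := half_bit_double m true. rewrite add1n => ->.
have -> : odd m.*2.+1 by rewrite /= odd_double.
case: m => [|m] //.
Qed.

Definition stp (pq : nat * nat) (b : bool) : nat * nat :=
  if b then (pq.1 + pq.2, pq.2) else (pq.1, pq.1 + pq.2).
Definition run (y : seq bool) (pq : nat * nat) := foldl stp pq y.

Lemma run_cat x y pq : run (x ++ y) pq = run y (run x pq).
Proof. by rewrite /run foldl_cat. Qed.

Lemma bin_val_rcons x b : bin_val (rcons x b) = (bin_val x).*2 + b.
Proof. by rewrite /bin_val -cats1 foldl_cat. Qed.

Lemma run_correct y x :
  (stern (bin_val (x ++ y)), stern (bin_val (x ++ y)).+1) =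
  run y (stern (bin_val x), stern (bin_val x).+1).
Proof.
elim: y x => [|b y IH] x; first by rewrite cats0.
rewrite -cat_rcons IH bin_val_rcons /=; congr run.
case: b; rewrite /stp /=.
- by rewrite addn1 stern_odd -doubleS stern_even.
- by rewrite addn0 stern_even stern_odd.
Qed.

Definition tf := [:: true; false].

Lemma fibSS n : fib n.+2 = fib n.+1 + fib n.
Proof. by []. Qed.

Lemma run_srep k p q : run (srep k.+1 tf) (p, q) =
  (p * fib k.*2.+1 + q * fib k.*2.+2, p * fib k.*2.+2 + q * fib k.*2.+3).
Proof.
elim: k p q => [|k IH] p q.
- rewrite /= /stp /=. congr pair; lia.
- have -> : srep k.+2 tf = tf ++ srep k.+1 tf by [].
  rewrite run_cat.
  have -> : run tf (p, q) = (p + q, p + q + q) by [].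
  rewrite IH doubleS.
  rewrite !fibSS. congr pair; nia.
Qed.

Lemma sval w : stern_s (bin_val w) = (run w (0, 1)).2.
Proof. by have := run_correct w [::]; rewrite cat0s => <-. Qed.

Lemma val_word j k : stern_s (bin_val (word (j.+1 + k) j.+1)) =
  (run (srep k tf) (fib j.*2.+2, fib j.*2.+2 + fib j.*2.+3)).2.
Proof.
rewrite sval /word run_cat run_srep run_cat.
have -> : j.+1 + k - j.+1 = k by lia.
by rewrite !mul0n !mul1n !add0n.
Qed.

Lemma sndE (a b : nat) : (a, b).2 = b. Proof. by []. Qed.

Lemma fib_mono n : fib n <= fib n.+1.
Proof. case: n => [|n] //; rewrite fibSS; lia. Qed.

Lemma fib_add a b : fib (a + b).+1 = fib a.+1 * fib b.+1 + fib a * fib b.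
Proof.
elim: a b => [|a IH] b; first by rewrite /= mul1n mul0n addn0.
rewrite addSnnS IH !fibSS. nia.
Qed.

Lemma bound j k : fib (j.+1 + k).*2.+1 + fib (j.+1 + k).*2.-1 <= stern_s (bin_val (word (j.+1 + k) j.+1)).
Proof.
rewrite val_word.
case: k => [|m].
- have -> : (j.+1 + 0).*2.+1 = j.*2.+3 by rewrite addn0 doubleS.
  have -> : (j.+1 + 0).*2.-1 = j.*2.+1 by rewrite addn0 doubleS.
  have := fib_mono j.*2.+1.
  have -> : forall x, run (srep 0 tf) x = x by [].
  rewrite [fib j.*2.+3]fibSS. rewrite sndE. lia.
- rewrite run_srep sndE.
  have -> : (j.+1 + m.+1).*2.+1 = (j.*2.+3 + m.*2.+1).+1 by rewrite -!muln2; lia.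
  have -> : (j.+1 + m.+1).*2.-1 = (j.*2.+1 + m.*2.+1).+1 by rewrite -!muln2; lia.
  rewrite !fib_add.
  have H := fib_mono j.*2.+1.
  have H2 : fib j.*2.+1 * fib m.*2.+1 <= fib j.*2.+2 * fib m.*2.+1 by apply: leq_mul.
  rewrite !fibSS in H H2 *.
  nia.
Qed.

Theorem mainTheorem11 (n : nat) : 1 <= n ->
  (exists2 i, 1 <= i <= n & stern_s (bin_val (word n i)) = fib n.*2.+1 + fib n.*2.-1) /\
  (forall i, 1 <= i <= n -> fib n.*2.+1 + fib n.*2.-1 <= stern_s (bin_val (word n i))).
Proof.
move=> Hn; split.
- exists 1; first by rewrite leqnn Hn.
  case: n Hn => [|[|m]] // _.
  have -> : m.+2 = 1 + m.+1 by [].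
  rewrite (val_word 0).
  rewrite run_srep sndE.
  have -> : (1 + m.+1).*2.+1 = m.*2.+4.+1 by rewrite -!muln2; lia.
  have -> : (1 + m.+1).*2.-1 = m.*2.+3 by rewrite -!muln2; lia.
  rewrite !fibSS.
  have -> : fib 0.*2.+1 = 1 by [].
  have -> : fib 0.*2 = 0 by [].
  lia.
- move=> i /andP [Hi1 Hin].
  have := bound i.-1 (n - i).
  have e : (i.-1).+1 + (n - i) = n by lia.
  have e2 : (i.-1).+1 = i by lia.
  by rewrite e e2.
Qed.
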